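(* For every nontrivial knot type $[K]$, $\mathrm{sps}[K]\le \mathrm{pl}[K]$.
   Context: A planar stick diagram of $[K]$ is a closed polygonal curve in the plane (finitely many straight line segments, called edges, joined end to end), whose self-intersections are transverse double points in the interiors of edges, with over/under crossing information at each self-intersection, representing $[K]$; $\mathrm{pl}[K]$ is the smallest number of edges in such a diagram. A spherical stick diagram of $[K]$ is a closed curve on the 2-sphere formed by finitely many arcs of great circles (not entire great circles) joined end to end, whose self-intersections are transverse double points away from the arc endpoints, with crossing information at each self-intersection, representing $[K]$. For nontrivial $[K]$, $\mathrm{sps}[K]$ is the minimum number of great circle arcs in such a diagram (undefined for the unknot). *)

(* Defs.v *)
From HB Require Import structures.
From mathcomp Require Import all_boot all_order all_algebra.
From mathcomp Require Import all_classical all_reals all_analysis.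
Set Implicit Arguments. Unset Strict Implicit. Unset Printing Implicit Defensive.
Import Order.TTheory GRing.Theory Num.Theory.
Import numFieldNormedType.Exports.
Local Open Scope ring_scope.
Local Open Scope classical_set_scope.

Section KnotDefs.
Variable R : realType.

Local Notation pt3 := (R * R * R)%type.
Local Notation pt2 := (R * R)%type.

Definition is_knot (K : set pt3) : Prop :=
  exists f : R -> pt3,
    continuous f /\ (forall t, f (t + 1) = f t) /\
    (forall s t, 0 <= s < 1 -> 0 <= t < 1 -> f s = f t -> s = t) /\
    range f = K.

Definition is_homeo (h : pt3 -> pt3) : Prop :=
  exists g : pt3 -> pt3, continuous h /\ continuous g /\
    cancel h g /\ cancel g h.

Definition ambient_isotopic (K1 K2 : set pt3) : Prop :=
  exists H : pt3 * R -> pt3,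
    continuous H /\
    (forall t, 0 <= t <= 1 -> is_homeo (fun x => H (x, t))) /\
    (forall x, H (x, 0) = x) /\
    [set H (x, 1) | x in K1] = K2.

Definition unknot : set pt3 :=
  [set p | p.1.1 ^+ 2 + p.1.2 ^+ 2 = 1 /\ p.2 = 0].

Definition nontrivial_knot (K : set pt3) : Prop :=
  is_knot K /\ ~ ambient_isotopic unknot K.

(* Vertices v 0, ..., v (n-1); edge i goes from v i to v ((i+1) mod n);
   a point of the curve is given by a parameter (i, s), i < n, 0 <= s < 1
   (s = 0 is the vertex v i). *)
Definition nxt (n i : nat) : nat := (i.+1 %% n)%N.

Definition pedge (n : nat) (v : nat -> pt2) (i : nat) (s : R) : pt2 :=
  ((1 - s) * (v i).1 + s * (v (nxt n i)).1,
   (1 - s) * (v i).2 + s * (v (nxt n i)).2).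

Definition pdir (n : nat) (v : nat -> pt2) (i : nat) : pt2 :=
  ((v (nxt n i)).1 - (v i).1, (v (nxt n i)).2 - (v i).2).

Definition det2 (a b : pt2) : R := a.1 * b.2 - a.2 * b.1.

Definition param (n : nat) (i : nat) (s : R) : Prop := (i < n)%N /\ 0 <= s < 1.

(* Closed polygonal curve with n edges whose self-intersections are
   transverse double points in the interiors of edges. *)
Definition planar_stick_curve (n : nat) (v : nat -> pt2) : Prop :=
  (0 < n)%N /\
  (forall i s j t, param n i s -> param n j t -> (i, s) <> (j, t) ->
      pedge n v i s = pedge n v j t ->
      [/\ 0 < s, 0 < t & det2 (pdir n v i) (pdir n v j) != 0]) /\
  (forall i s j t k u, param n i s -> param n j t -> param n k u ->
      (i, s) <> (j, t) -> (i, s) <> (k, u) -> (j, t) <> (k, u) ->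
      ~ (pedge n v i s = pedge n v j t /\ pedge n v j t = pedge n v k u)).

(* A planar stick diagram with n edges represents the knot type of K:
   there is a continuous height function h over the curve (the crossing
   information being which strand is higher at each crossing) such that
   the lifted curve (x, y, h) is embedded and has the knot type of K. *)
Definition planar_stick_diagram_of (K : set pt3) (n : nat) : Prop :=
  exists v : nat -> pt2, planar_stick_curve n v /\
  exists h : nat -> R -> R,
    (forall i, (i < n)%N -> {within `[0, 1], continuous (h i)}) /\
    (forall i, (i < n)%N -> h i 1 = h (nxt n i) 0) /\
    (forall i s j t, param n i s -> param n j t ->
       (pedge n v i s, h i s) = (pedge n v j t, h j t) -> (i, s) = (j, t)) /\
    ambient_isotopic
      [set x | exists i s, param n i s /\ x = (pedge n v i s, h i s)] K.

Definition add3 (a b : pt3) : pt3 := (a.1.1 + b.1.1, a.1.2 + b.1.2, a.2 + b.2).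
Definition scale3 (c : R) (a : pt3) : pt3 := (c * a.1.1, c * a.1.2, c * a.2).
Definition dot3 (a b : pt3) : R := a.1.1 * b.1.1 + a.1.2 * b.1.2 + a.2 * b.2.
Definition cross3 (a b : pt3) : pt3 :=
  (a.1.2 * b.2 - a.2 * b.1.2, a.2 * b.1.1 - a.1.1 * b.2,
   a.1.1 * b.1.2 - a.1.2 * b.1.1).

(* Arc i: s |-> cos(s a_i) p_i + sin(s a_i) w_i, s in [0,1], with p_i, w_i
   orthonormal and 0 < a_i < 2 pi (an arc of a great circle which is not
   the entire great circle). *)
Definition sarc (p w : nat -> pt3) (a : nat -> R) (i : nat) (s : R) : pt3 :=
  add3 (scale3 (cos (s * a i)) (p i)) (scale3 (sin (s * a i)) (w i)).

Definition stang (p w : nat -> pt3) (a : nat -> R) (i : nat) (s : R) : pt3 :=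
  add3 (scale3 (- sin (s * a i)) (p i)) (scale3 (cos (s * a i)) (w i)).

Definition spherical_stick_curve (n : nat) (p w : nat -> pt3) (a : nat -> R)
  : Prop :=
  (0 < n)%N /\
  (forall i, (i < n)%N ->
     [/\ dot3 (p i) (p i) = 1, dot3 (w i) (w i) = 1, dot3 (p i) (w i) = 0,
         0 < a i < 2 * pi & sarc p w a i 1 = p (nxt n i)]) /\
  (forall i s j t, param n i s -> param n j t -> (i, s) <> (j, t) ->
      sarc p w a i s = sarc p w a j t ->
      [/\ 0 < s, 0 < t & cross3 (stang p w a i s) (stang p w a j t) != (0, 0, 0)]) /\
  (forall i s j t k u, param n i s -> param n j t -> param n k u ->
      (i, s) <> (j, t) -> (i, s) <> (k, u) -> (j, t) <> (k, u) ->
      ~ (sarc p w a i s = sarc p w a j t /\ sarc p w a j t = sarc p w a k u)).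

(* A spherical stick diagram with n arcs represents the knot type of K:
   there is a continuous positive radius function r over the curve (the
   crossing information being which strand is farther from the centre) such
   that the radially lifted curve r * sigma is embedded and has the knot type
   of K. *)
Definition spherical_stick_diagram_of (K : set pt3) (n : nat) : Prop :=
  exists (p w : nat -> pt3) (a : nat -> R), spherical_stick_curve n p w a /\
  exists r : nat -> R -> R,
    (forall i, (i < n)%N -> {within `[0, 1], continuous (r i)}) /\
    (forall i s, (i < n)%N -> 0 <= s <= 1 -> 0 < r i s) /\
    (forall i, (i < n)%N -> r i 1 = r (nxt n i) 0) /\
    (forall i s j t, param n i s -> param n j t ->
       scale3 (r i s) (sarc p w a i s) = scale3 (r j t) (sarc p w a j t) ->
       (i, s) = (j, t)) /\
    ambient_isotopic
      [set x | exists i s, param n i s /\ x = scale3 (r i s) (sarc p w a i s)] K.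

End KnotDefs.

(* Main.v *)
Require Import Defs.
From HB Require Import structures.
From mathcomp Require Import all_boot all_order all_algebra.
From mathcomp Require Import all_classical all_reals all_analysis.
From mathcomp Require Import ring lra.
Set Implicit Arguments. Unset Strict Implicit. Unset Printing Implicit Defensive.
Import Order.TTheory GRing.Theory Num.Theory.
Import numFieldNormedType.Exports.
Local Open Scope ring_scope.
Local Open Scope classical_set_scope.
Section Cts.
Variable R : realType.
Local Notation pt3 := (R * R * R)%type.

Section gen.
Variable T : topologicalType.
Implicit Types (f g : T -> R) (x : T).
Lemma cadd f g x : {for x, continuous f} -> {for x, continuous g} ->
  {for x, continuous (fun y => f y + g y)}.
Proof. exact: continuousD. Qed.
Lemma cmul f g x : {for x, continuous f} -> {for x, continuous g} ->
  {for x, continuous (fun y => f y * g y)}.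
Proof. exact: continuousM. Qed.
Lemma copp f x : {for x, continuous f} -> {for x, continuous (fun y => - f y)}.
Proof. exact: continuousN. Qed.
Lemma cinv f x : f x != 0 -> {for x, continuous f} -> {for x, continuous (fun y => (f y)^-1)}.
Proof. exact: continuousV. Qed.
Lemma ccst (k : R) x : {for x, continuous (fun _ : T => k)}.
Proof. exact: cvg_cst. Qed.
Lemma cmax f g x : {for x, continuous f} -> {for x, continuous g} ->
  {for x, continuous (fun y => Num.max (f y) (g y))}.
Proof. exact: continuous_max. Qed.
Lemma cmin f g x : {for x, continuous f} -> {for x, continuous g} ->
  {for x, continuous (fun y => Num.min (f y) (g y))}.
Proof. exact: continuous_min. Qed.
End gen.

Lemma cfst (T U : topologicalType) (x : T * U) : {for x, continuous (@fst T U)}.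
Proof. by case: x => a b; apply: cvg_fst. Qed.
Lemma csnd (T U : topologicalType) (x : T * U) : {for x, continuous (@snd T U)}.
Proof. by case: x => a b; apply: cvg_snd. Qed.
Lemma cpair (T U V : topologicalType) (f : T -> U) (g : T -> V) x :
  {for x, continuous f} -> {for x, continuous g} -> {for x, continuous (fun y => (f y, g y))}.
Proof. by move=> hf hg; apply: cvg_pair. Qed.
Lemma ccomp (T U V : topologicalType) (f : T -> U) (g : U -> V) x :
  {for x, continuous f} -> {for (f x), continuous g} -> {for x, continuous (fun y => g (f y))}.
Proof. exact: continuous_comp. Qed.

Lemma cpair3 (T : topologicalType) (f g h : T -> R) x :
  {for x, continuous f} -> {for x, continuous g} -> {for x, continuous h} ->
  {for x, continuous (fun y => ((f y, g y, h y) : pt3))}.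
Proof.
move=> hf hg hh; apply: (@cpair T (R * R)%type R) => //.
exact: (@cpair T R R).
Qed.

Lemma cX1 (x : pt3) : {for x, continuous (fun y : pt3 => y.1.1)}.
Proof. exact: (@ccomp _ _ _ fst fst x (@cfst _ _ x) (@cfst _ _ _)). Qed.
Lemma cX2 (x : pt3) : {for x, continuous (fun y : pt3 => y.1.2)}.
Proof. exact: (@ccomp _ _ _ fst snd x (@cfst _ _ x) (@csnd _ _ _)). Qed.
Lemma cX3 (x : pt3) : {for x, continuous (fun y : pt3 => y.2)}.
Proof. exact: csnd. Qed.
Lemma cY1 (x : pt3 * R) : {for x, continuous (fun y : pt3 * R => y.1.1.1)}.
Proof. exact: (@ccomp _ _ _ fst (fun y : pt3 => y.1.1) x (@cfst _ _ x) (@cX1 _)). Qed.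
Lemma cY2 (x : pt3 * R) : {for x, continuous (fun y : pt3 * R => y.1.1.2)}.
Proof. exact: (@ccomp _ _ _ fst (fun y : pt3 => y.1.2) x (@cfst _ _ x) (@cX2 _)). Qed.
Lemma cY3 (x : pt3 * R) : {for x, continuous (fun y : pt3 * R => y.1.2)}.
Proof. exact: (@ccomp _ _ _ fst (fun y : pt3 => y.2) x (@cfst _ _ x) (@cX3 _)). Qed.
Lemma cYt (x : pt3 * R) : {for x, continuous (fun y : pt3 * R => y.2)}.
Proof. exact: csnd. Qed.

Definition tau (t : R) : R := Num.min 1 (Num.max 0 t).
Definition kapF (c t w : R) : R := 1 - t + t * Num.max 1 (w + c).
Definition Fmap (c t : R) (X : pt3) : pt3 :=
  (X.1.1 * kapF c t X.2, X.1.2 * kapF c t X.2, X.2 + t * c).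
Definition Emap (c t : R) (X : pt3) : pt3 :=
  (X.1.1 / kapF c t (X.2 - t * c), X.1.2 / kapF c t (X.2 - t * c), X.2 - t * c).

Lemma tau01 t : 0 <= tau t <= 1.
Proof.
rewrite /tau; apply/andP; split.
  by rewrite le_min ler01 le_max lexx.
by rewrite ge_min lexx.
Qed.

Lemma tau_id t : 0 <= t <= 1 -> tau t = t.
Proof.
move=> /andP[h0 h1]; rewrite /tau.
have -> : Num.max 0 t = t by rewrite max_r.
by rewrite min_r.
Qed.

Lemma kap_ge1 c t w : 0 <= t <= 1 -> 1 <= kapF c t w.
Proof.
move=> /andP[h0 h1]; rewrite /kapF.
have : 1 <= Num.max 1 (w + c) by rewrite le_max lexx.
nra.
Qed.

Lemma EFK c t : 0 <= t <= 1 -> cancel (Fmap c t) (Emap c t).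
Proof.
move=> ht [[x y] z]; rewrite /Fmap /Emap /=.
have -> : z + t * c - t * c = z by ring.
have k0 : kapF c t z != 0 by rewrite gt_eqF // (lt_le_trans ltr01) // kap_ge1.
by rewrite !mulfK.
Qed.

Lemma FEK c t : 0 <= t <= 1 -> cancel (Emap c t) (Fmap c t).
Proof.
move=> ht [[x y] z]; rewrite /Fmap /Emap /=.
have k0 : kapF c t (z - t * c) != 0 by rewrite gt_eqF // (lt_le_trans ltr01) // kap_ge1.
rewrite !divfK //; congr (_, _, _); ring.
Qed.

Lemma Fmap_cts c t : continuous (Fmap c t).
Proof.
move=> X; apply: (@cpair3 pt3); rewrite /kapF.
- apply: cmul; first by apply: ccomp; [apply: cfst| apply: cfst].
  apply: cadd; first exact: ccst.
  apply: cmul; first exact: ccst.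
  apply: cmax; first exact: ccst.
  apply: cadd; [exact: csnd| exact: ccst].
- apply: cmul; first by apply: ccomp; [apply: cfst| apply: csnd].
  apply: cadd; first exact: ccst.
  apply: cmul; first exact: ccst.
  apply: cmax; first exact: ccst.
  apply: cadd; [exact: csnd| exact: ccst].
- apply: cadd; [exact: csnd| exact: ccst].
Qed.

Lemma Emap_joint c : continuous (fun xt : pt3 * R => Emap c (tau xt.2) xt.1).
Proof.
move=> xt.
have ht : {for xt, continuous (fun y : pt3 * R => tau y.2)}.
  rewrite /tau; apply: cmin; first exact: ccst.
  apply: cmax; [exact: ccst| exact: cYt].
have hz : {for xt, continuous (fun y : pt3 * R => y.1.2 - tau y.2 * c)}.
  apply: cadd; first exact: cY3.
  by apply: copp; apply: cmul => //; exact: ccst.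
have hk : {for xt, continuous (fun y : pt3 * R => (kapF c (tau y.2) (y.1.2 - tau y.2 * c))^-1)}.
  apply: cinv.
    by rewrite gt_eqF // (lt_le_trans ltr01) // kap_ge1 // tau01.
  rewrite /kapF; apply: cadd; first by apply: cadd; [exact: ccst| exact: copp].
  apply: cmul => //; apply: cmax; first exact: ccst.
  by apply: cadd => //; exact: ccst.
apply: (@cpair3 (pt3 * R)%type).
- apply: cmul => //; exact: cY1.
- apply: cmul => //; exact: cY2.
- exact: hz.
Qed.




Lemma kapF0 c w : kapF c 0 w = 1.
Proof. by rewrite /kapF subr0 mul0r addr0. Qed.

Lemma Emap0 c : Emap c 0 =1 id.
Proof.
case=> [[x y] z]; rewrite /Emap kapF0 /= !divr1 mul0r subr0 //.
Qed.

Lemma tau0 : tau 0 = 0.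
Proof. by rewrite tau_id // lexx ler01. Qed.
Lemma tau1 : tau 1 = 1.
Proof. by rewrite tau_id // lexx ler01. Qed.

Lemma Emap_cts c t : 0 <= t <= 1 -> continuous (Emap c t).
Proof.
move=> ht X.
have e : Emap c t = (fun xt : pt3 * R => Emap c (tau xt.2) xt.1) \o (fun x : pt3 => (x, t)).
  by apply: funext => x /=; rewrite tau_id.
rewrite e; apply: continuous_comp; last exact: Emap_joint.
apply: (@cpair pt3 pt3 R); [exact: cvg_id| exact: cvg_cst].
Qed.

Lemma iso_transfer c (L S K : set pt3) :
  ambient_isotopic L K ->
  (forall x, S x -> L (Emap c 1 x)) -> (forall y, L y -> S (Fmap c 1 y)) ->
  ambient_isotopic S K.
Proof.
move=> [H [Hc [Hh [H0 HK]]]] SL LS.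
exists (fun xt : pt3 * R => H (Emap c (tau xt.2) xt.1, xt.2)).
split; last split; last split.
- move=> xt.
  apply: (@ccomp _ _ _ (fun xt : pt3 * R => (Emap c (tau xt.2) xt.1, xt.2)) H xt); last exact: Hc.
  apply: (@cpair (pt3 * R)%type pt3 R); [exact: Emap_joint| exact: csnd].
- move=> t ht; have [g [hc [gc [hg gh]]]] := Hh t ht.
  exists (fun y => Fmap c t (g y)); split; last split; last split.
  + move=> x /=; rewrite tau_id //.
    apply: (@ccomp _ _ _ (Emap c t) (fun x => H (x, t)) x); first exact: Emap_cts.
    exact: hc.
  + move=> y; apply: (@ccomp _ _ _ g (Fmap c t) y); first exact: gc.
    exact: Fmap_cts.
  + move=> x /=; rewrite tau_id // hg; exact: FEK.
  + move=> y /=; rewrite tau_id // EFK //; exact: gh.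
- by move=> x /=; rewrite tau0 Emap0 H0.
- rewrite -HK; apply/seteqP; split => _ [x hx <-].
    by exists (Emap c 1 x) => //=; [exact: SL| rewrite tau1].
  exists (Fmap c 1 x); first exact: LS.
  by rewrite /= tau1 EFK // lexx ler01.
Qed.

End Cts.
Section W.
Variable R : realType.

Lemma within_comp_in (A B : set R) (g h : R -> R) :
  (forall x, B x -> {for x, continuous g}) -> (forall x, B x -> A (g x)) ->
  {within A, continuous h} -> {within B, continuous (fun x => h (g x))}.
Proof.
move=> gc gBA hc; apply/subspace_continuousP => x Bx.
have hA := (@subspace_continuousP _ A _ h).1 hc (g x) (gBA x Bx).
move=> P hP; have := hA P hP; rewrite /= nbhs_simpl /= /within /= => hQ.
have := gc x Bx _ hQ; rewrite /= nbhs_simpl /=.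
apply: filterS => y hy By; exact: hy (gBA y By).
Qed.

Lemma hbound (n : nat) (h : nat -> R -> R) :
  (forall i, (i < n)%N -> {within `[0, 1], continuous (h i)}) ->
  exists c : R, forall i s, (i < n)%N -> 0 <= s <= 1 -> 1 <= h i s + c.
Proof.
elim: n => [|n IH] hc; first by exists 0.
have [c hc'] : exists c : R, forall i s, (i < n)%N -> 0 <= s <= 1 -> 1 <= h i s + c.
  by apply: IH => i hi; apply: hc; apply: ltnW.
have [m hm hmin] := EVT_min (@ler01 R) (hc n (ltnSn n)).
exists (Num.max c (1 - h n m)) => i s hi hs.
have [e|ne] := eqVneq i n.
  rewrite e; have := hmin s; rewrite in_itv /= hs => /(_ isT).
  have : 1 - h n m <= Num.max c (1 - h n m) by rewrite le_max lexx orbT.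
  lra.
have hi' : (i < n)%N by rewrite ltn_neqAle ne -ltnS.
have := hc' i s hi' hs.
have : c <= Num.max c (1 - h n m) by rewrite le_max lexx.
lra.
Qed.
End W.
Section Geo.
Variable R : realType.
Local Notation pt3 := (R * R * R)%type.
Local Notation pt2 := (R * R)%type.

Lemma eq3 (a b : pt3) : a.1.1 = b.1.1 -> a.1.2 = b.1.2 -> a.2 = b.2 -> a = b.
Proof. by case: a => [[? ?] ?]; case: b => [[? ?] ?] /= -> -> ->. Qed.

Definition Pof (z : pt2) : pt3 := (z.1, z.2, 1).
Definition nrm (X : pt3) : R := Num.sqrt (dot3 X X).
Definition unitv (z : pt2) : pt3 := scale3 (nrm (Pof z))^-1 (Pof z).
Definition ang (z z' : pt2) : R := acos (dot3 (unitv z) (unitv z')).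
Definition wv (z z' : pt2) : pt3 :=
  scale3 (sin (ang z z'))^-1 (add3 (unitv z') (scale3 (- cos (ang z z')) (unitv z))).
Definition alph (z z' : pt2) (s : R) : R :=
  (cos (s * ang z z') - sin (s * ang z z') * cos (ang z z') / sin (ang z z')) / nrm (Pof z).
Definition bet (z z' : pt2) (s : R) : R :=
  sin (s * ang z z') / (sin (ang z z') * nrm (Pof z')).
Definition lam (z z' : pt2) (s : R) : R :=
  (- sin (s * ang z z') - cos (s * ang z z') * cos (ang z z') / sin (ang z z')) / nrm (Pof z).
Definition nu (z z' : pt2) (s : R) : R :=
  cos (s * ang z z') / (sin (ang z z') * nrm (Pof z')).

Lemma dotP z : dot3 (Pof z) (Pof z) = z.1 ^+ 2 + z.2 ^+ 2 + 1.
Proof. rewrite /dot3 /=; ring. Qed.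

Lemma dotP_ge1 z : 1 <= dot3 (Pof z) (Pof z).
Proof. rewrite dotP; have := sqr_ge0 z.1; have := sqr_ge0 z.2; lra. Qed.

Lemma nrm_gt0 z : 0 < nrm (Pof z).
Proof. rewrite /nrm sqrtr_gt0; have := dotP_ge1 z; lra. Qed.

Lemma nrm_sqr z : nrm (Pof z) ^+ 2 = dot3 (Pof z) (Pof z).
Proof. rewrite /nrm sqr_sqrtr //; have := dotP_ge1 z; lra. Qed.

Lemma unit_dot z : dot3 (unitv z) (unitv z) = 1.
Proof.
have h := nrm_sqr z; have h0 := nrm_gt0 z.
move: h; rewrite /unitv /dot3 /Pof /= => h.
have : nrm (z.1, z.2, 1) != 0 by rewrite gt_eqF.
move: (nrm _) h => A h hA.
transitivity ((z.1 * z.1 + z.2 * z.2 + 1 * 1) / A ^+ 2); first by field.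
by rewrite h divff // -h expf_neq0.
Qed.

Lemma unit_dot2 z z' : dot3 (unitv z) (unitv z') =
   dot3 (Pof z) (Pof z') / (nrm (Pof z) * nrm (Pof z')).
Proof.
have h0 := nrm_gt0 z; have h1 := nrm_gt0 z'.
rewrite /unitv /dot3 /=; field; by rewrite !gt_eqF.
Qed.

Lemma unit_dot_lt z z' : z != z' -> (dot3 (unitv z) (unitv z')) ^+ 2 < 1.
Proof.
move=> hz; rewrite unit_dot2 expr_div_n exprMn !nrm_sqr.
have h0 := dotP_ge1 z; have h1 := dotP_ge1 z'.
rewrite ltr_pdivrMr; last by apply: mulr_gt0; lra.
rewrite mul1r.
have lag : dot3 (Pof z) (Pof z) * dot3 (Pof z') (Pof z') - dot3 (Pof z) (Pof z') ^+ 2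
   = (z.2 - z'.2) ^+ 2 + (z'.1 - z.1) ^+ 2 + (z.1 * z'.2 - z.2 * z'.1) ^+ 2.
  rewrite /dot3 /=; ring.
rewrite -subr_gt0 lag.
have : (z.2 - z'.2) ^+ 2 + (z'.1 - z.1) ^+ 2 > 0.
  clear h0 h1 lag; case: z z' hz => [a b] [c d] hz /=.
  have [e|e] := eqVneq b d.
    have hac : a != c by apply: contraNneq hz => ->; rewrite e.
    rewrite e subrr expr0n /= add0r lt_neqAle sqr_ge0 andbT eq_sym sqrf_eq0.
    by rewrite subr_eq0 eq_sym.
  have : 0 < (b - d) ^+ 2 by rewrite lt_neqAle sqr_ge0 andbT eq_sym sqrf_eq0 subr_eq0.
  have := sqr_ge0 (c - a); lra.
have := sqr_ge0 (z.1 * z'.2 - z.2 * z'.1); lra.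
Qed.

Lemma dot3C (x y : pt3) : dot3 x y = dot3 y x.
Proof. rewrite /dot3; ring. Qed.

Lemma dot_lin (x y : pt3) a b c d :
  dot3 (add3 (scale3 a x) (scale3 b y)) (add3 (scale3 c x) (scale3 d y)) =
  a * c * dot3 x x + (a * d + b * c) * dot3 x y + b * d * dot3 y y.
Proof. rewrite /dot3 /add3 /scale3 /=; ring. Qed.

Lemma dot_r (x y w : pt3) a b :
  dot3 x (add3 (scale3 a y) (scale3 b w)) = a * dot3 x y + b * dot3 x w.
Proof. rewrite /dot3 /add3 /scale3 /=; ring. Qed.

Section Edge.
Variables z z' : pt2.
Hypothesis hz : z != z'.
Local Notation c := (dot3 (unitv z) (unitv z')).
Local Notation a := (ang z z').

Lemma c_bounds : -1 < c < 1.
Proof.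
have h := unit_dot_lt hz.
have : c ^+ 2 = c * c by rewrite expr2.
move=> e; rewrite e in h; apply/andP; split; nra.
Qed.

Lemma ang_bounds : 0 < a < pi.
Proof.
have /andP[h1 h2] := c_bounds.
rewrite /ang acos_gt0 ?acos_ltpi //; apply/andP; split; lra.
Qed.

Lemma cos_ang : cos a = c.
Proof. have /andP[h1 h2] := c_bounds; rewrite /ang acosK // in_itv /=; apply/andP; split; lra. Qed.

Lemma sin_ang_gt0 : 0 < sin a.
Proof. by apply: sin_gt0_pi; apply: ang_bounds. Qed.

Lemma sin_ang_sqr : sin a ^+ 2 = 1 - c ^+ 2.
Proof. by rewrite sin2cos2 cos_ang. Qed.

Lemma wv_eq : wv z z' = add3 (scale3 (- c / sin a) (unitv z)) (scale3 (sin a)^-1 (unitv z')).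
Proof.
rewrite /wv cos_ang; apply: eq3; rewrite /add3 /scale3 /=; ring.
Qed.

Lemma wv_dot : dot3 (wv z z') (wv z z') = 1.
Proof.
have hs := sin_ang_gt0; have hs2 := sin_ang_sqr.
rewrite wv_eq dot_lin !unit_dot.
have hs0 : sin a != 0 by rewrite gt_eqF.
apply: (@mulfI _ (sin a ^+ 2)); first by rewrite expf_neq0.
rewrite mulr1 {2}hs2; field; done.
Qed.

Lemma uw_dot : dot3 (unitv z) (wv z z') = 0.
Proof.
have hs0 : sin a != 0 by rewrite gt_eqF // sin_ang_gt0.
rewrite wv_eq dot_r unit_dot.
field; done.
Qed.

Lemma arc_end : add3 (scale3 (cos a) (unitv z)) (scale3 (sin a) (wv z z')) = unitv z'.
Proof.
have hA : nrm (Pof z) != 0 by rewrite gt_eqF // nrm_gt0.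
have hB : nrm (Pof z') != 0 by rewrite gt_eqF // nrm_gt0.
have hs0 : sin a != 0 by rewrite gt_eqF // sin_ang_gt0.
rewrite wv_eq cos_ang; apply: eq3; rewrite /add3 /scale3 /=; field; by rewrite hs0 hA hB.
Qed.

Lemma arc_PP s : add3 (scale3 (cos (s * a)) (unitv z)) (scale3 (sin (s * a)) (wv z z')) =
  add3 (scale3 (alph z z' s) (Pof z)) (scale3 (bet z z' s) (Pof z')).
Proof.
have hs0 : sin a != 0 by rewrite gt_eqF // sin_ang_gt0.
have hA : nrm (Pof z) != 0 by rewrite gt_eqF // nrm_gt0.
have hB : nrm (Pof z') != 0 by rewrite gt_eqF // nrm_gt0.
rewrite wv_eq /alph /bet /unitv cos_ang.
apply: eq3; rewrite /add3 /scale3 /=; field; rewrite ?hs0 ?hA ?hB //.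
Qed.

Lemma tang_PP s : add3 (scale3 (- sin (s * a)) (unitv z)) (scale3 (cos (s * a)) (wv z z')) =
  add3 (scale3 (lam z z' s) (Pof z)) (scale3 (nu z z' s) (Pof z')).
Proof.
have hs0 : sin a != 0 by rewrite gt_eqF // sin_ang_gt0.
have hA : nrm (Pof z) != 0 by rewrite gt_eqF // nrm_gt0.
have hB : nrm (Pof z') != 0 by rewrite gt_eqF // nrm_gt0.
rewrite wv_eq /lam /nu /unitv cos_ang.
apply: eq3; rewrite /add3 /scale3 /=; field; rewrite ?hs0 ?hA ?hB //.
Qed.


Local Notation A := (nrm (Pof z)).
Local Notation B := (nrm (Pof z')).

Lemma alph_sin s : alph z z' s = sin (a - s * a) / (A * sin a).
Proof.
have hs0 : sin a != 0 by rewrite gt_eqF // sin_ang_gt0.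
have hA : A != 0 by rewrite gt_eqF // nrm_gt0.
rewrite sinB /alph; field; by rewrite hs0 hA.
Qed.

Lemma sin_pos (x : R) : 0 < x < pi -> 0 < sin x.
Proof. exact: sin_gt0_pi. Qed.

Lemma sin_nneg (x : R) : 0 <= x <= pi -> 0 <= sin x.
Proof. exact: sin_ge0_pi. Qed.

Lemma alph_ge0 s : 0 <= s <= 1 -> 0 <= alph z z' s.
Proof.
move=> /andP[s0 s1]; have /andP[a0 api] := ang_bounds.
rewrite alph_sin; apply: divr_ge0; last by apply: mulr_ge0; [apply: ltW; exact: nrm_gt0| apply: ltW; exact: sin_ang_gt0].
apply: sin_nneg; apply/andP; split; nra.
Qed.

Lemma alph_gt0 s : 0 <= s < 1 -> 0 < alph z z' s.
Proof.
move=> /andP[s0 s1]; have /andP[a0 api] := ang_bounds.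
rewrite alph_sin; apply: divr_gt0; last by apply: mulr_gt0; [exact: nrm_gt0| exact: sin_ang_gt0].
apply: sin_pos; apply/andP; split; nra.
Qed.

Lemma bet_ge0 s : 0 <= s <= 1 -> 0 <= bet z z' s.
Proof.
move=> /andP[s0 s1]; have /andP[a0 api] := ang_bounds.
rewrite /bet; apply: divr_ge0; last by apply: mulr_ge0; [apply: ltW; exact: sin_ang_gt0| apply: ltW; exact: nrm_gt0].
apply: sin_nneg; apply/andP; split; nra.
Qed.

Lemma bet_gt0 s : 0 < s <= 1 -> 0 < bet z z' s.
Proof.
move=> /andP[s0 s1]; have /andP[a0 api] := ang_bounds.
rewrite /bet; apply: divr_gt0; last by apply: mulr_gt0; [exact: sin_ang_gt0| exact: nrm_gt0].
apply: sin_pos; apply/andP; split; nra.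
Qed.

Lemma ab_gt0 s : 0 <= s <= 1 -> 0 < alph z z' s + bet z z' s.
Proof.
move=> /andP[s0 s1].
have [e|ne] := eqVneq s 1.
  have := @alph_ge0 s; have := @bet_gt0 s; rewrite e; lra.
have := @alph_gt0 s; have := @bet_ge0 s; rewrite s0 s1 /=.
have : s < 1 by rewrite lt_neqAle ne s1.
move=> h; rewrite h; lra.
Qed.

Lemma alph1 : alph z z' 1 = 0.
Proof. by rewrite alph_sin mul1r subrr sin0 mul0r. Qed.

Lemma bet0 : bet z z' 0 = 0.
Proof. by rewrite /bet mul0r sin0 mul0r. Qed.

Lemma alph0 : alph z z' 0 = A^-1.
Proof.
have hs0 : sin a != 0 by rewrite gt_eqF // sin_ang_gt0.
rewrite alph_sin mul0r subr0; field; by rewrite hs0 gt_eqF // nrm_gt0.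
Qed.

Lemma bet1 : bet z z' 1 = B^-1.
Proof.
have hs0 : sin a != 0 by rewrite gt_eqF // sin_ang_gt0.
rewrite /bet mul1r; field; by rewrite hs0 gt_eqF // nrm_gt0.
Qed.

Lemma ab_inj s s' : 0 <= s <= 1 -> 0 <= s' <= 1 ->
  alph z z' s * bet z z' s' = alph z z' s' * bet z z' s -> s = s'.
Proof.
move=> /andP[s0 s1] /andP[t0 t1] e.
have hs0 : sin a != 0 by rewrite gt_eqF // sin_ang_gt0.
have hA : A != 0 by rewrite gt_eqF // nrm_gt0.
have hB : B != 0 by rewrite gt_eqF // nrm_gt0.
have h : sin (s' * a - s * a) / (A * sin a * B) =
   alph z z' s * bet z z' s' - alph z z' s' * bet z z' s.
  rewrite sinB /alph /bet; field; by rewrite hs0 hA hB.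
rewrite e subrr in h.
have hden : A * sin a * B != 0 by rewrite !mulf_neq0.
have h0 : sin (s' * a - s * a) = 0.
  by move/eqP: h; rewrite mulf_eq0 invr_eq0 (negbTE hden) orbF => /eqP.
have /andP[a0 api] := ang_bounds.
have [lt|gt|//] := ltgtP s s'.
  have : 0 < sin (s' * a - s * a) by apply: sin_pos; apply/andP; split; nra.
  by rewrite h0 ltxx.
have : 0 < sin (s * a - s' * a) by apply: sin_pos; apply/andP; split; nra.
by rewrite -opprB sinN h0 oppr0 ltxx.
Qed.


Definition sig s := bet z z' s / (alph z z' s + bet z z' s).
Definition Qp (t : R) : pt3 := ((1 - t) * z.1 + t * z'.1, (1 - t) * z.2 + t * z'.2, 1).
Definition Dv : pt3 := (z'.1 - z.1, z'.2 - z.2, 0).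
Definition mu s := nu z z' s * (1 - sig s) - lam z z' s * sig s.

Lemma arc_Q s : 0 <= s <= 1 ->
  add3 (scale3 (alph z z' s) (Pof z)) (scale3 (bet z z' s) (Pof z')) =
  scale3 (alph z z' s + bet z z' s) (Qp (sig s)).
Proof.
move=> hs; have h := ab_gt0 hs.
have h0 : alph z z' s + bet z z' s != 0 by rewrite gt_eqF.
apply: eq3; rewrite /add3 /scale3 /Qp /sig /Pof /=; field; done.
Qed.

Lemma tang_Q s : 0 <= s <= 1 ->
  add3 (scale3 (lam z z' s) (Pof z)) (scale3 (nu z z' s) (Pof z')) =
  add3 (scale3 (lam z z' s + nu z z' s) (Qp (sig s))) (scale3 (mu s) Dv).
Proof.
move=> hs; have h := ab_gt0 hs.
have h0 : alph z z' s + bet z z' s != 0 by rewrite gt_eqF.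
apply: eq3; rewrite /add3 /scale3 /Qp /mu /sig /Dv /Pof /=; field; done.
Qed.

Lemma sig_ge0 s : 0 <= s <= 1 -> 0 <= sig s.
Proof. move=> hs; apply: divr_ge0; [exact: bet_ge0|exact/ltW/ab_gt0]. Qed.

Lemma sig_le1 s : 0 <= s <= 1 -> sig s <= 1.
Proof.
move=> hs; have h := ab_gt0 hs; have := alph_ge0 hs.
rewrite /sig ler_pdivrMr // mul1r; lra.
Qed.

Lemma sig_gt0 s : 0 < s <= 1 -> 0 < sig s.
Proof.
move=> /andP[s0 s1]; have hs : 0 <= s <= 1 by rewrite s1 ltW.
apply: divr_gt0; [apply: bet_gt0; by rewrite s0 s1|exact/ab_gt0].
Qed.

Lemma sig_lt1 s : 0 <= s < 1 -> sig s < 1.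
Proof.
move=> /andP[s0 s1]; have hs : 0 <= s <= 1 by rewrite s0 ltW.
have h := ab_gt0 hs; have : 0 < alph z z' s by apply: alph_gt0; rewrite s0 s1.
rewrite /sig ltr_pdivrMr // mul1r; lra.
Qed.

Lemma sig0 : sig 0 = 0.
Proof. by rewrite /sig bet0 mul0r. Qed.

Lemma sig1 : sig 1 = 1.
Proof.
rewrite /sig alph1 add0r divff // bet1 invr_eq0 gt_eqF //; exact: nrm_gt0.
Qed.

Lemma sig_inj s s' : 0 <= s <= 1 -> 0 <= s' <= 1 -> sig s = sig s' -> s = s'.
Proof.
move=> hs hs' e; apply: ab_inj => //.
have h := ab_gt0 hs; have h' := ab_gt0 hs'.
have h0 : alph z z' s + bet z z' s != 0 by rewrite gt_eqF.
have h0' : alph z z' s' + bet z z' s' != 0 by rewrite gt_eqF.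
move: e; rewrite /sig => e.
have e2 : bet z z' s * (alph z z' s' + bet z z' s') = bet z z' s' * (alph z z' s + bet z z' s).
  apply: (@mulIf _ ((alph z z' s + bet z z' s)^-1 * (alph z z' s' + bet z z' s')^-1)).
    by rewrite mulf_neq0 // invr_eq0.
  have -> : bet z z' s * (alph z z' s' + bet z z' s') *
    ((alph z z' s + bet z z' s)^-1 * (alph z z' s' + bet z z' s')^-1) =
    bet z z' s / (alph z z' s + bet z z' s) by field; rewrite h0 h0'.
  rewrite e; field; by rewrite h0 h0'.
have : alph z z' s * bet z z' s' - alph z z' s' * bet z z' s = 0.
  by move: e2; lra.
lra.
Qed.

Lemma tang_dot s : dot3 (add3 (scale3 (- sin (s * a)) (unitv z)) (scale3 (cos (s * a)) (wv z z')))
   (add3 (scale3 (- sin (s * a)) (unitv z)) (scale3 (cos (s * a)) (wv z z'))) = 1.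
Proof.
rewrite dot_lin unit_dot uw_dot wv_dot.
have := cos2sin2 (s * a); rewrite !expr2 => e; lra.
Qed.

Lemma tang_arc_dot s : dot3 (add3 (scale3 (- sin (s * a)) (unitv z)) (scale3 (cos (s * a)) (wv z z')))
   (add3 (scale3 (cos (s * a)) (unitv z)) (scale3 (sin (s * a)) (wv z z'))) = 0.
Proof. rewrite dot_lin unit_dot uw_dot wv_dot; ring. Qed.

Lemma arc_dot s : dot3 (add3 (scale3 (cos (s * a)) (unitv z)) (scale3 (sin (s * a)) (wv z z')))
   (add3 (scale3 (cos (s * a)) (unitv z)) (scale3 (sin (s * a)) (wv z z'))) = 1.
Proof.
rewrite dot_lin unit_dot uw_dot wv_dot.
have := cos2sin2 (s * a); rewrite !expr2 => e; lra.
Qed.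

Lemma mu_nz s : 0 <= s <= 1 -> mu s != 0.
Proof.
move=> hs; apply/negP => /eqP m0.
have T1 := tang_dot s; have T0 := tang_arc_dot s.
rewrite tang_PP (tang_Q hs) m0 in T1 T0.
rewrite arc_PP (arc_Q hs) in T0.
move: T1 T0; set l := lam z z' s + nu z z' s; set k := alph z z' s + bet z z' s.
set X := Qp (sig s) => T1 T0.
have hk := ab_gt0 hs.
have hX : 1 <= dot3 X X.
  rewrite /X /Qp /dot3 /=.
  have := sqr_ge0 ((1 - sig s) * z.1 + sig s * z'.1).
  have := sqr_ge0 ((1 - sig s) * z.2 + sig s * z'.2); rewrite !expr2; lra.
have e1 : dot3 (add3 (scale3 l X) (scale3 0 Dv)) (add3 (scale3 l X) (scale3 0 Dv)) = l * l * dot3 X X.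
  by rewrite /dot3 /add3 /scale3 /=; ring.
have e2 : dot3 (add3 (scale3 l X) (scale3 0 Dv)) (scale3 k X) = l * k * dot3 X X.
  by rewrite /dot3 /add3 /scale3 /=; ring.
rewrite e1 in T1; rewrite e2 in T0.
have : l * k = 0.
  by move/eqP: T0; rewrite mulf_eq0 => /orP[/eqP //|/eqP h]; move: hX; rewrite h; lra.
move/eqP; rewrite mulf_eq0 (gt_eqF hk) orbF => /eqP l0.
by move: T1; rewrite l0 !mul0r => /eqP; rewrite eq_sym oner_eq0.
Qed.

End Edge.

Lemma cross_dot (X : pt3) (D1 D2 : pt3) l1 m1 l2 m2 : X.2 = 1 -> D1.2 = 0 -> D2.2 = 0 ->
  dot3 (cross3 (add3 (scale3 l1 X) (scale3 m1 D1)) (add3 (scale3 l2 X) (scale3 m2 D2))) X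
  = m1 * m2 * (D1.1.1 * D2.1.2 - D1.1.2 * D2.1.1).
Proof.
case: X => [[x y] w]; case: D1 => [[d e] f]; case: D2 => [[g h] k] /= -> -> ->.
rewrite /dot3 /cross3 /add3 /scale3 /=; ring.
Qed.

End Geo.

Section Cts2.
Variable R : realType.
Local Notation pt3 := (R * R * R)%type.
Local Notation pt2 := (R * R)%type.

Lemma ctrig (f : R -> R) (k : R) x : continuous f -> {for x, continuous (fun s : R => f (s * k))}.
Proof.
move=> fc; apply: (@ccomp _ _ _ (fun s : R => s * k) f x); last exact: fc.
by apply: cmul; [exact: cvg_id| exact: ccst].
Qed.

Lemma alph_cts (z z' : pt2) : continuous (alph z z').
Proof.
move=> x.
apply: (@cmul R R (fun s => cos (s * ang z z') - sin (s * ang z z') * cos (ang z z') / sin (ang z z')) (fun _ => (nrm (Pof z))^-1)); last exact: ccst.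
apply: (@cadd R R); first exact: (@ctrig (@cos R) (ang z z') x (@continuous_cos R)).
apply: (@copp R R); apply: (@cmul R R); last exact: ccst.
apply: (@cmul R R); last exact: ccst.
exact: (@ctrig (@sin R) (ang z z') x (@continuous_sin R)).
Qed.

Lemma bet_cts (z z' : pt2) : continuous (bet z z').
Proof.
move=> x.
apply: (@cmul R R (fun s => sin (s * ang z z')) (fun _ => (sin (ang z z') * nrm (Pof z'))^-1)); last exact: ccst.
exact: (@ctrig (@sin R) (ang z z') x (@continuous_sin R)).
Qed.

Lemma abinv_cts (z z' : pt2) s : z != z' -> 0 <= s <= 1 ->
  {for s, continuous (fun t => (alph z z' t + bet z z' t)^-1)}.
Proof.
move=> hz hs; apply: (@cinv R R); first by rewrite gt_eqF // ab_gt0.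
by apply: (@cadd R R); [exact: alph_cts| exact: bet_cts].
Qed.

Lemma sig_cts (z z' : pt2) s : z != z' -> 0 <= s <= 1 -> {for s, continuous (sig z z')}.
Proof.
move=> hz hs.
apply: (@cmul R R (bet z z') (fun t => (alph z z' t + bet z z' t)^-1)); first exact: bet_cts.
exact: abinv_cts.
Qed.

Lemma sig_within (z z' : pt2) : z != z' -> {within `[0, 1], continuous (sig z z')}.
Proof.
move=> hz; apply: continuous_in_subspaceT => x; rewrite inE /= in_itv /= => hx.
exact: sig_cts.
Qed.

End Cts2.

Section Main.
Variable R : realType.
Local Notation pt3 := (R * R * R)%type.
Local Notation pt2 := (R * R)%type.
Variables (n : nat) (v : nat -> pt2) (h : nat -> R -> R) (c : R).
Hypothesis hv : forall i, (i < n)%N -> v i != v (nxt n i).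
Hypothesis hc : forall i s, (i < n)%N -> 0 <= s <= 1 -> 1 <= h i s + c.

Definition sp i := unitv (v i).
Definition sw i := wv (v i) (v (nxt n i)).
Definition sa i := ang (v i) (v (nxt n i)).
Definition sg i s := sig (v i) (v (nxt n i)) s.
Definition kk i s := alph (v i) (v (nxt n i)) s + bet (v i) (v (nxt n i)) s.
Definition rr i s := (h i (sg i s) + c) / kk i s.

Lemma kk_gt0 i s : (i < n)%N -> 0 <= s <= 1 -> 0 < kk i s.
Proof. by move=> hi hs; apply: ab_gt0 => //; apply: hv. Qed.

Lemma sarc_Q i s : (i < n)%N -> 0 <= s <= 1 ->
  sarc sp sw sa i s = scale3 (kk i s) (Qp (v i) (v (nxt n i)) (sg i s)).
Proof.
move=> hi hs; rewrite /sarc /sp /sw /sa (arc_PP (hv hi)) (arc_Q (hv hi) hs) //.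
Qed.

Lemma stang_Q i s : (i < n)%N -> 0 <= s <= 1 ->
  stang sp sw sa i s = add3 (scale3 (lam (v i) (v (nxt n i)) s + nu (v i) (v (nxt n i)) s)
     (Qp (v i) (v (nxt n i)) (sg i s))) (scale3 (mu (v i) (v (nxt n i)) s) (Dv (v i) (v (nxt n i)))).
Proof.
move=> hi hs; rewrite /stang /sp /sw /sa (tang_PP (hv hi)) (tang_Q (hv hi) hs) //.
Qed.

Lemma pedge_Q i t : pedge n v i t = ((Qp (v i) (v (nxt n i)) t).1.1, (Qp (v i) (v (nxt n i)) t).1.2).
Proof. by []. Qed.

Lemma sg_01 i s : (i < n)%N -> 0 <= s <= 1 -> 0 <= sg i s <= 1.
Proof. by move=> hi hs; rewrite sig_ge0 ?sig_le1 //; apply: hv. Qed.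

Lemma sg_param i s : param n i s -> param n i (sg i s).
Proof.
move=> [hi /andP[s0 s1]]; split => //.
rewrite sig_ge0 ?sig_lt1 //; try apply: hv => //.
  by rewrite s0 s1.
by rewrite s0 ltW.
Qed.

Lemma lift_eq i s : (i < n)%N -> 0 <= s <= 1 ->
  scale3 (rr i s) (sarc sp sw sa i s) = Fmap c 1 (pedge n v i (sg i s), h i (sg i s)).
Proof.
move=> hi hs; rewrite sarc_Q // /rr.
have hk := kk_gt0 hi hs.
have hH := hc hi (sg_01 hi hs).
have e : kapF c 1 (h i (sg i s)) = h i (sg i s) + c.
  by rewrite /kapF subrr add0r mul1r max_r.
rewrite /Fmap /= e.
have k0 : kk i s != 0 by rewrite gt_eqF.
apply: eq3; rewrite /scale3 /Qp /=; field; done.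
Qed.

Lemma sarc_inj_Q i j s t : (i < n)%N -> (j < n)%N -> 0 <= s <= 1 -> 0 <= t <= 1 ->
  sarc sp sw sa i s = sarc sp sw sa j t ->
  Qp (v i) (v (nxt n i)) (sg i s) = Qp (v j) (v (nxt n j)) (sg j t).
Proof.
move=> hi hj hs ht; rewrite !sarc_Q //.
have hk := kk_gt0 hi hs; have hk' := kk_gt0 hj ht.
have z1 : (Qp (v i) (v (nxt n i)) (sg i s)).2 = 1 by [].
have z2 : (Qp (v j) (v (nxt n j)) (sg j t)).2 = 1 by [].
move: (Qp _ _ _) (Qp _ _ _) (kk i s) (kk j t) hk hk' z1 z2 => [[x1 y1] w1] [[x2 y2] w2] k k' hk hk' /= -> ->.
rewrite /scale3 /= => -[e1 e2 e3].
have ek : k = k' by move: e3; rewrite !mulr1.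
rewrite -ek in e1 e2.
have k0 : k != 0 by rewrite gt_eqF.
by rewrite (mulfI k0 e1) (mulfI k0 e2).
Qed.

Lemma neq_transfer i j s t : param n i s -> param n j t -> (i, s) <> (j, t) ->
  (i, sg i s) <> (j, sg j t).
Proof.
move=> [hi /andP[s0 s1]] [hj /andP[t0 t1]] ne [ei e]; apply: ne.
subst j; congr (_, _); apply: (sig_inj (hv hi)) => //.
  by rewrite s0 ltW.
by rewrite t0 ltW.
Qed.

Lemma cross_nz i j s t : param n i s -> param n j t ->
  sarc sp sw sa i s = sarc sp sw sa j t ->
  det2 (pdir n v i) (pdir n v j) != 0 ->
  cross3 (stang sp sw sa i s) (stang sp sw sa j t) != (0, 0, 0).
Proof.
move=> [hi /andP[s0 s1]] [hj /andP[t0 t1]] e hdet.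
have hs : 0 <= s <= 1 by rewrite s0 ltW.
have ht : 0 <= t <= 1 by rewrite t0 ltW.
have eQ := sarc_inj_Q hi hj hs ht e.
rewrite (stang_Q hi hs) (stang_Q hj ht) -eQ.
apply/negP => /eqP e0.
have := cross_dot (lam (v i) (v (nxt n i)) s + nu (v i) (v (nxt n i)) s)
   (mu (v i) (v (nxt n i)) s) (lam (v j) (v (nxt n j)) t + nu (v j) (v (nxt n j)) t)
   (mu (v j) (v (nxt n j)) t) (X := Qp (v i) (v (nxt n i)) (sg i s))
   (D1 := Dv (v i) (v (nxt n i))) (D2 := Dv (v j) (v (nxt n j))) erefl erefl erefl.
rewrite e0 /dot3 /= !mul0r !add0r => /esym /eqP.
rewrite !mulf_eq0.
have -> : (Dv (v i) (v (nxt n i))).1.1 * (Dv (v j) (v (nxt n j))).1.2 -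
   (Dv (v i) (v (nxt n i))).1.2 * (Dv (v j) (v (nxt n j))).1.1 = det2 (pdir n v i) (pdir n v j) by [].
by rewrite (negbTE hdet) orbF (negbTE (mu_nz (hv hi) hs)) (negbTE (mu_nz (hv hj) ht)).
Qed.


Hypothesis hcont : forall i, (i < n)%N -> {within `[0, 1], continuous (h i)}.

Lemma rr_cont i : (i < n)%N -> {within `[0, 1], continuous (rr i)}.
Proof.
move=> hi; apply/subspace_continuousP => x hx.
have hx' : 0 <= x <= 1 by move: hx; rewrite /= in_itv.
have hcomp : {within `[0, 1], continuous (fun s => h i (sg i s))}.
  apply: within_comp_in (hcont hi).
    by move=> y hy; apply: (sig_cts (hv hi)); move: hy; rewrite /= in_itv.
  move=> y hy; have hy' : 0 <= y <= 1 by move: hy; rewrite /= in_itv.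
  by rewrite /= in_itv; apply: sg_01.
have h1 := (@subspace_continuousP _ _ _ (fun s => h i (sg i s))).1 hcomp x hx.
have h2 : (fun s => (kk i s)^-1) @ within `[0, 1] (nbhs x) --> (kk i x)^-1.
  apply: cvg_trans _ (abinv_cts (hv hi) hx'); apply: cvg_fmap2; apply: cvg_within.
rewrite /rr; apply: cvgM => //; apply: cvgD => //; exact: cvg_cst.
Qed.

Lemma rr_pos i s : (i < n)%N -> 0 <= s <= 1 -> 0 < rr i s.
Proof.
move=> hi hs; rewrite /rr; apply: divr_gt0; last exact: kk_gt0.
have := hc hi (sg_01 hi hs); lra.
Qed.

Hypothesis hend : forall i, (i < n)%N -> h i 1 = h (nxt n i) 0.
Hypothesis hn : (0 < n)%N.

Lemma nxt_lt i : (nxt n i < n)%N.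
Proof. by rewrite /nxt ltn_mod. Qed.

Lemma rr_end i : (i < n)%N -> rr i 1 = rr (nxt n i) 0.
Proof.
move=> hi; have hj := nxt_lt i.
have h1 := hv hi; have h2 := hv hj.
rewrite /rr /sg /kk (sig1 h1) sig0 (alph1 h1) (bet1 h1).
by rewrite (alph0 h2) bet0 add0r addr0 hend.
Qed.

Lemma EF1 y : Emap c 1 (Fmap c 1 y) = y.
Proof. by rewrite EFK // lexx ler01. Qed.

Lemma lifted_inj i s j t : param n i s -> param n j t ->
  scale3 (rr i s) (sarc sp sw sa i s) = scale3 (rr j t) (sarc sp sw sa j t) ->
  (forall i s j t, param n i s -> param n j t ->
       (pedge n v i s, h i s) = (pedge n v j t, h j t) -> (i, s) = (j, t)) ->
  (i, s) = (j, t).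
Proof.
move=> ps pt e hinj.
have [hi /andP[s0 s1]] := ps; have [hj /andP[t0 t1]] := pt.
have hs : 0 <= s <= 1 by rewrite s0 ltW.
have ht : 0 <= t <= 1 by rewrite t0 ltW.
rewrite (lift_eq hi hs) (lift_eq hj ht) in e.
have := congr1 (Emap c 1) e; rewrite !EF1 => e'.
have := hinj _ _ _ _ (sg_param ps) (sg_param pt) e'.
case=> eij esg; subst j; congr (_, _).
exact: (sig_inj (hv hi)).
Qed.

End Main.

Theorem theorem3p2 (R : realType) (K : set (R * R * R)) :
  nontrivial_knot K ->
  forall n : nat, planar_stick_diagram_of K n ->
  exists m : nat, (m <= n)%N /\ spherical_stick_diagram_of K m.
Proof.
move=> _ n [v [[hn [hcr htr]] [h [hcont [hend [hinj hiso]]]]]].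
have hv : forall i, (i < n)%N -> v i != v (nxt n i).
  move=> i hi; apply/negP => /eqP e.
  have p0 : param n i (0 : R) by split => //; rewrite lexx ltr01.
  have p1 : param n i (2^-1 : R) by split => //; rewrite invr_ge0 ler0n /= invf_lt1 // ltr1n.
  have ne : (i, 0) <> (i, 2^-1) :> (nat * R).
    by case => /esym /eqP; rewrite invr_eq0 pnatr_eq0.
  have ee : pedge n v i 0 = pedge n v i (2^-1 : R).
    by rewrite /pedge -e; congr (_, _); ring.
  by have [] := hcr _ _ _ _ p0 p1 ne ee; rewrite ltxx.
have [c hcc] := hbound hcont.
have hc : forall i s, (i < n)%N -> 0 <= s <= 1 -> 1 <= h i s + c by [].
have pe_eq : forall i s j t, param n i s -> param n j t ->
    sarc (sp v) (sw n v) (sa n v) i s = sarc (sp v) (sw n v) (sa n v) j t ->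
    pedge n v i (sg n v i s) = pedge n v j (sg n v j t).
  move=> i s j t [hi /andP[s0 s1]] [hj /andP[t0 t1]] e.
  have hs : 0 <= s <= 1 by rewrite s0 ltW.
  have ht : 0 <= t <= 1 by rewrite t0 ltW.
  by rewrite !pedge_Q (sarc_inj_Q hv hi hj hs ht e).
have pos_of : forall i s, param n i s -> 0 < sg n v i s -> 0 < s.
  move=> i s [hi /andP[s0 s1]] hp; rewrite lt_neqAle s0 andbT.
  by apply: contraTneq hp => <-; rewrite /sg sig0 ltxx.
exists n; split => //.
exists (sp v), (sw n v), (sa n v); split.
  split => //; split; last split.
  - move=> i hi; have hz := hv i hi; split.
    + exact: unit_dot.
    + exact: wv_dot.
    + exact: uw_dot.
    + have /andP[a0 api] := ang_bounds hz.
      rewrite /sa a0 /=; have := pi_gt0 R; lra.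
    + by rewrite /sarc /sp /sw /sa mul1r arc_end.
  - move=> i s j t ps pt ne e.
    have ne' := neq_transfer hv ps pt ne.
    have [q1 q2 q3] := hcr _ _ _ _ (sg_param hv ps) (sg_param hv pt) ne' (pe_eq _ _ _ _ ps pt e).
    split; [exact: pos_of q1| exact: pos_of q2|].
    exact: cross_nz.
  - move=> i s j t k u ps pt pu n1 n2 n3 [e1 e2].
    apply: (htr _ _ _ _ _ _ (sg_param hv ps) (sg_param hv pt) (sg_param hv pu)
      (neq_transfer hv ps pt n1) (neq_transfer hv ps pu n2) (neq_transfer hv pt pu n3)).
    by split; apply: pe_eq.
exists (rr n v h c); split; last split; last split; last split.
- move=> i hi; exact: rr_cont.
- by move=> i s hi hs; apply: rr_pos.
- move=> i hi; exact: rr_end.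
- by move=> i s j t ps pt e; apply: (lifted_inj hv hc ps pt e).
apply: (iso_transfer (c := c) hiso).
  move=> _ [i [s [ps ->]]].
  have [hi /andP[s0 s1]] := ps.
  have hs : 0 <= s <= 1 by rewrite s0 ltW.
  rewrite (lift_eq hv hc hi hs) EF1.
  by exists i, (sg n v i s); split => //; apply: sg_param.
move=> _ [i [t [pt ->]]].
have [hi /andP[t0 t1]] := pt.
have hz := hv i hi.
have [s hs es] : exists2 s, s \in `[0, 1]%R & sig (v i) (v (nxt n i)) s = t.
  apply: (@IVT R (sig (v i) (v (nxt n i))) 0 1 t); first exact: ler01.
    exact: sig_within.
  rewrite sig0 (sig1 hz) /Num.min /Num.max ltr01 /= t0 ltW //.
move: hs; rewrite in_itv /= => /andP[s0 s1].
have s1' : s < 1.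
  rewrite lt_neqAle s1 andbT; apply: contraTneq t1 => e1.
  by rewrite -es e1 (sig1 hz) ltxx.
exists i, s; split; first by split => //; rewrite s0 s1'.
by rewrite (lift_eq hv hc hi) ?s0 ?s1 // /sg es.
Qed.
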